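(* Let $L$ be a lattice with almost permutable congruences. Then $\operatorname{Con}_c L$ satisfies $\mathrm{URP}_1^-$ at every principal congruence $\Theta_L(u,v)$, $u,v\in L$.
   Context: Two congruences $\alpha,\beta$ of a lattice are almost permutable if $\alpha\vee\beta=\alpha\beta\cup\beta\alpha$, where $\alpha\beta=\{(x,y): \exists z,\ (x,z)\in\alpha,\ (z,y)\in\beta\}$; $L$ has almost permutable congruences if any two of its congruences are almost permutable. $\operatorname{Con}_c L$ is the $\{\vee,0\}$-semilattice of compact congruences of $L$, and $\Theta_L(u,v)$ is the least congruence identifying $u,v$. Let $S$ be a join-semilattice, $\varepsilon\in S$, and $\sigma=((\alpha_i,\beta_i))_{i\in I}$ a family in $S\times S$ with $\alpha_i\vee\beta_i=\varepsilon$ for all $i$. $S$ satisfies $\mathrm{URP}_1^-$ at $\sigma$ if there exist a subset $X\subseteq I$, a family $((\alpha_i^*,\beta_i^* ))_{i\in I}$ in $S\times S$ and a family $(\gamma_{i,j})_{(i,j)\in I\times I}$ in $S$ such that: (i) $\alpha_i^*\leq\alpha_i$, $\beta_i^*\leq\beta_i$, $\alpha_i^*\vee\beta_i^*=\varepsilon$ for all $i$; (ii) $\gamma_{i,j}\leq\alpha_i^*$ and $\gamma_{i,j}\leq\beta_j^*$ for all $i,j$; (iii) $\alpha_i^*\leq\alpha_j^*\vee\gamma_{i,j}$ and $\beta_j^*\leq\beta_i^*\vee\gamma_{i,j}$ for all $i,j$; (iv) $\gamma_{i,k}\leq\gamma_{i,j}\vee\gamma_{j,k}$ for all $i,j,k\in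 I$ such that ($\{i,k\}\subseteq X\Rightarrow j\in X$) and ($\{i,k\}\subseteq I\setminus X\Rightarrow j\in I\setminus X$). $S$ satisfies $\mathrm{URP}_1^-$ at $\varepsilon$ if it satisfies $\mathrm{URP}_1^-$ at every such family $\sigma$ with $\alpha_i\vee\beta_i=\varepsilon$ for all $i$. *)

(* Defs.v *)
From HB Require Import structures.
From mathcomp Require Import all_boot all_order.
From Stdlib Require List.
Set Implicit Arguments. Unset Strict Implicit. Unset Printing Implicit Defensive.
Import Order.LTheory.
Local Open Scope order_scope.

Section Congruences.
Context {d : Order.disp_t} (L : latticeType d).

Definition lrel := L -> L -> Prop.

Definition rle (a b : lrel) : Prop := forall x y, a x y -> b x y.
Definition req (a b : lrel) : Prop := forall x y, a x y <-> b x y.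

Definition is_con (t : lrel) : Prop :=
  [/\ (forall x, t x x),
      (forall x y, t x y -> t y x),
      (forall x y z, t x y -> t y z -> t x z),
      (forall x y z, t x y -> t (x `&` z) (y `&` z)) &
      (forall x y z, t x y -> t (x `|` z) (y `|` z))].

Definition con_bigjoin (F : lrel -> Prop) : lrel :=
  fun x y => forall t, is_con t -> (forall f, F f -> rle f t) -> t x y.

Definition con_join (a b : lrel) : lrel :=
  fun x y => forall t, is_con t -> rle a t -> rle b t -> t x y.

Definition Theta (u v : L) : lrel :=
  fun x y => forall t, is_con t -> t u v -> t x y.

Definition compact_con (a : lrel) : Prop :=
  forall F : lrel -> Prop, (forall f, F f -> is_con f) ->
    rle a (con_bigjoin F) ->
    exists s : seq lrel, (forall f, List.In f s -> F f) /\
      rle a (con_bigjoin (fun f => List.In f s)).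

Definition in_Conc (a : lrel) : Prop := is_con a /\ compact_con a.

Definition rcomp (a b : lrel) : lrel := fun x y => exists z, a x z /\ b z y.

Definition almost_permutable (a b : lrel) : Prop :=
  req (con_join a b) (fun x y => rcomp a b x y \/ rcomp b a x y).

Definition has_almost_permutable_congruences : Prop :=
  forall a b, is_con a -> is_con b -> almost_permutable a b.

Definition URP1m_at_family (eps : lrel) (I : Type) (alpha beta : I -> lrel) : Prop :=
  exists (X : I -> Prop) (alpha' beta' : I -> lrel) (gamma : I -> I -> lrel),
    (forall i, in_Conc (alpha' i)) /\ (forall i, in_Conc (beta' i)) /\
    (forall i j, in_Conc (gamma i j)) /\
    (forall i, rle (alpha' i) (alpha i) /\ rle (beta' i) (beta i) /\
               req (con_join (alpha' i) (beta' i)) eps) /\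
    (forall i j, rle (gamma i j) (alpha' i) /\ rle (gamma i j) (beta' j)) /\
    (forall i j, rle (alpha' i) (con_join (alpha' j) (gamma i j)) /\
                 rle (beta' j) (con_join (beta' i) (gamma i j))) /\
    (forall i j k, ((X i /\ X k) -> X j) -> ((~ X i /\ ~ X k) -> ~ X j) ->
       rle (gamma i k) (con_join (gamma i j) (gamma j k))).

Definition URP1m_at (eps : lrel) : Prop :=
  forall (I : Type) (alpha beta : I -> lrel),
    (forall i, in_Conc (alpha i)) -> (forall i, in_Conc (beta i)) ->
    (forall i, req (con_join (alpha i) (beta i)) eps) ->
    URP1m_at_family eps alpha beta.

End Congruences.

(* Main.v *)
Require Import Defs.
From mathcomp Require Import all_boot all_order.
From Stdlib Require Import Classical ClassicalEpsilon.
From Stdlib Require List.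
Import Order.LTheory.
Local Open Scope order_scope.

Section Aux.
Context {d : Order.disp_t} {L : latticeType d}.
Implicit Types (t a b : lrel L) (x y z p q : L).

Lemma cM t x y z : is_con t -> t x y -> t (x `&` z) (y `&` z).
Proof. by case=> _ _ _ H _; apply: H. Qed.
Lemma cJ t x y z : is_con t -> t x y -> t (x `|` z) (y `|` z).
Proof. by case=> _ _ _ _ H; apply: H. Qed.
Lemma cMl t x y z : is_con t -> t x y -> t (z `&` x) (z `&` y).
Proof. by move=> H h; rewrite ![z `&` _]meetC; apply: cM. Qed.
Lemma cJl t x y z : is_con t -> t x y -> t (z `|` x) (z `|` y).
Proof. by move=> H h; rewrite ![z `|` _]joinC; apply: cJ. Qed.
Lemma cS t x y : is_con t -> t x y -> t y x.
Proof. by case=> _ H _ _ _; apply: H. Qed.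
Lemma cT t x y z : is_con t -> t x y -> t y z -> t x z.
Proof. by case=> _ _ H _ _; apply: H. Qed.
Lemma cR t x : is_con t -> t x x.
Proof. by case=> H _ _ _ _; apply: H. Qed.

Arguments cM {t x y} z.
Arguments cJ {t x y} z.
Arguments cMl {t x y} z.
Arguments cJl {t x y} z.
Arguments cS {t x y}.
Arguments cT {t x y z}.
Arguments cR {t} x.

Lemma Theta_con p q : is_con (Theta p q).
Proof.
split.
- by move=> x t Ht _; apply: cR.
- by move=> x y H t Ht h; apply: cS; last apply: H.
- by move=> x y z H1 H2 t Ht h; apply: (cT Ht (H1 t Ht h) (H2 t Ht h)).
- by move=> x y z H t Ht h; apply: cM; last apply: H.
- by move=> x y z H t Ht h; apply: cJ; last apply: H.
Qed.
Lemma Theta_pq p q : Theta p q p q.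
Proof. by move=> t _ h. Qed.
Lemma Theta_min t p q : is_con t -> t p q -> rle (Theta p q) t.
Proof. by move=> Ht h x y H; apply: H. Qed.

Lemma join_con a b : is_con (con_join a b).
Proof.
split.
- by move=> x t Ht _ _; apply: cR.
- by move=> x y H t Ht h1 h2; apply: cS; last apply: H.
- by move=> x y z H1 H2 t Ht h1 h2; apply: (cT Ht (H1 t Ht h1 h2) (H2 t Ht h1 h2)).
- by move=> x y z H t Ht h1 h2; apply: cM; last apply: H.
- by move=> x y z H t Ht h1 h2; apply: cJ; last apply: H.
Qed.
Lemma cjoin_l a b : rle a (con_join a b).
Proof. by move=> x y h t _ h1 _; apply: h1. Qed.
Lemma cjoin_r a b : rle b (con_join a b).
Proof. by move=> x y h t _ _ h2; apply: h2. Qed.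
Lemma join_min a b t : is_con t -> rle a t -> rle b t -> rle (con_join a b) t.
Proof. by move=> Ht h1 h2 x y H; apply: H. Qed.

Lemma join_Theta p q p1 q1 p2 q2 :
  (forall t, is_con t -> t p1 q1 -> t p2 q2 -> t p q) ->
  rle (Theta p q) (con_join (Theta p1 q1) (Theta p2 q2)).
Proof.
move=> H; apply: Theta_min; first exact: join_con.
move=> t Ht h1 h2; apply: H => //; [apply: h1 | apply: h2]; exact: Theta_pq.
Qed.

Lemma bigjoin_con (F : lrel L -> Prop) : is_con (con_bigjoin F).
Proof.
split.
- by move=> x t Ht _; apply: cR.
- by move=> x y H t Ht h; apply: cS; last apply: H.
- by move=> x y z H1 H2 t Ht h; apply: (cT Ht (H1 t Ht h) (H2 t Ht h)).
- by move=> x y z H t Ht h; apply: cM; last apply: H.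
- by move=> x y z H t Ht h; apply: cJ; last apply: H.
Qed.
Lemma bigjoin_ub (F : lrel L -> Prop) f : F f -> rle f (con_bigjoin F).
Proof. by move=> Ff x y h t Ht H; apply: (H f). Qed.
Lemma bigjoin_mono (F0 G0 : lrel L -> Prop) :
  (forall f, F0 f -> G0 f) -> rle (con_bigjoin F0) (con_bigjoin G0).
Proof. by move=> FG x y H t Ht Hu; apply: H => // f Ff; apply: Hu; apply: FG. Qed.

Definition Rfin (F : lrel L -> Prop) : lrel L := fun x y =>
  exists s : seq (lrel L), (forall f, List.In f s -> F f) /\
     con_bigjoin (fun f => List.In f s) x y.

Lemma Rfin_con (F : lrel L -> Prop) : is_con (Rfin F).
Proof.
split.
- move=> x; exists [::]; split => //; apply: cR; exact: bigjoin_con.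
- by move=> x y [s [Hs H]]; exists s; split=> //; apply: (cS (bigjoin_con _)).
- move=> x y z [s1 [Hs1 H1]] [s2 [Hs2 H2]]; exists (s1 ++ s2); split.
    by move=> f Hf; case: (List.in_app_or _ _ _ Hf) => ?; [apply: Hs1|apply: Hs2].
  apply: (cT (bigjoin_con _)).
    refine (bigjoin_mono (fun f => List.In f s1) _ _ _ _ H1) => f Hf; apply: List.in_or_app; by left.
  refine (bigjoin_mono (fun f => List.In f s2) _ _ _ _ H2) => f Hf; apply: List.in_or_app; by right.
- by move=> x y z [s [Hs H]]; exists s; split=> //; apply: (cM _ (bigjoin_con _)).
- by move=> x y z [s [Hs H]]; exists s; split=> //; apply: (cJ _ (bigjoin_con _)).
Qed.

Lemma Theta_compact p q : compact_con (Theta p q).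
Proof.
move=> F HF H.
have : Rfin F p q.
  apply: (H p q (Theta_pq p q)); first exact: Rfin_con.
  move=> f Ff x y h; exists [:: f]; split.
    by move=> g [<-|[]].
  by apply: (bigjoin_ub (fun g => List.In g [:: f]) f) => //; left.
case=> s [Hs Hpq]; exists s; split => //.
by apply: Theta_min => //; exact: bigjoin_con.
Qed.

Lemma Theta_Conc p q : in_Conc (Theta p q).
Proof. split; [exact: Theta_con | exact: Theta_compact]. Qed.

Lemma conv t (a0 c p q : L) : is_con t -> a0 <= p -> p <= q -> q <= c -> t a0 c -> t p q.
Proof.
move=> Ht h1 h2 h3 h.
have h' := cJ p Ht h.
rewrite (join_r h1) (join_l (le_trans h2 h3)) in h'.
have h'' := cM q Ht h'.
by rewrite (meet_l h2) (meet_r h3) in h''.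
Qed.

End Aux.
Arguments cM {d L t x y} z.
Arguments cJ {d L t x y} z.
Arguments cMl {d L t x y} z.
Arguments cJl {d L t x y} z.
Arguments cS {d L t x y}.
Arguments cT {d L t x y z}.
Arguments cR {d L t} x.
Arguments conv {d L t a0 c p q}.


Section Main.
Context {d : Order.disp_t} {L : latticeType d}.

Lemma thle (p q p' q' : L) : (forall t, is_con t -> t p' q' -> t p q) ->
  rle (Theta p q) (Theta p' q').
Proof. move=> H; apply: Theta_min; [exact: Theta_con | exact: H]. Qed.

Lemma main_family (a b : L) (ab : a <= b) (I : Type) (alpha beta : I -> lrel L)
  (eps : lrel L) (z : I -> L) (xb : I -> bool)
  (Ha : forall i, is_con (alpha i)) (Hb : forall i, is_con (beta i))
  (Hz1 : forall i, a <= z i) (Hz2 : forall i, z i <= b)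
  (Hspec : forall i, if xb i then alpha i a (z i) /\ beta i (z i) b
                     else beta i a (z i) /\ alpha i (z i) b)
  (Heps : forall i, req (con_join (alpha i) (beta i)) eps)
  (Heps_ab : forall t, is_con t -> t a b -> rle eps t)
  (Heps_con : is_con eps) :
  URP1m_at_family eps alpha beta.
Proof.
pose alpha' i := if xb i then Theta a (z i) else Theta (z i) b.
pose beta' i := if xb i then Theta (z i) b else Theta a (z i).
pose gamma i j := match xb i, xb j with
 | true, true => Theta (z i `&` z j) (z i)
 | true, false => Theta a (z i `&` z j)
 | false, true => Theta (z i `|` z j) b
 | false, false => Theta (z i) (z i `|` z j) end.
exists (fun i => xb i = true), alpha', beta', gamma.
split; first by move=> i; rewrite /alpha'; case: (xb i); apply: Theta_Conc.
split; first by move=> i; rewrite /beta'; case: (xb i); apply: Theta_Conc.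
split; first by move=> i j; rewrite /gamma; case: (xb i); case: (xb j); apply: Theta_Conc.
have Hab' : forall i, rle (alpha' i) (alpha i) /\ rle (beta' i) (beta i).
  move=> i; rewrite /alpha' /beta'; move: (Hspec i); case: (xb i) => -[h1 h2];
  by split; apply: Theta_min.
have ab_gen : forall i, con_join (alpha' i) (beta' i) a b.
  move=> i t Ht h1 h2; rewrite /alpha' /beta' in h1 h2; case: (xb i) in h1 h2 *.
    by apply: (cT Ht); [apply: h1 | apply: h2]; exact: Theta_pq.
  by apply: (cT Ht); [apply: h2 | apply: h1]; exact: Theta_pq.
split.
  move=> i; have [h1 h2] := Hab' i; split; first exact: h1.
  split; first exact: h2.
  move=> x0 y0; split.
    apply: (join_min _ _ _ Heps_con).
      by move=> x1 y1 /h1 h; apply/(Heps i); apply: cjoin_l.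
    by move=> x1 y1 /h2 h; apply/(Heps i); apply: cjoin_r.
  by move=> H; apply: (Heps_ab _ (join_con _ _) (ab_gen i) _ _ H).
have zIl i j : z i `&` z j <= z i by exact: leIl.
have zIr i j : z i `&` z j <= z j by exact: leIr.
have zUl i j : z i <= z i `|` z j by exact: leUl.
have zUr i j : z j <= z i `|` z j by exact: leUr.
have aI i j : a <= z i `&` z j by rewrite lexI !Hz1.
have Ub i j : z i `|` z j <= b by rewrite leUx !Hz2.
split.
  move=> i j; rewrite /gamma /alpha' /beta'.
  case: (xb i); case: (xb j); split; apply: thle => t Ht h.
  - exact: (conv Ht (aI i j) (zIl i j) (lexx _) h).
  - by have := cMl (z i) Ht h; rewrite (meet_l (Hz2 i)).
  - exact: (conv Ht (lexx _) (aI i j) (zIl i j) h).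
  - exact: (conv Ht (lexx _) (aI i j) (zIr i j) h).
  - exact: (conv Ht (zUl i j) (Ub i j) (lexx _) h).
  - exact: (conv Ht (zUr i j) (Ub i j) (lexx _) h).
  - exact: (conv Ht (lexx _) (zUl i j) (Ub i j) h).
  - by have := cJl (z i) Ht h; rewrite (join_l (Hz1 i)).
split.
  move=> i j; rewrite /gamma /alpha' /beta'.
  case: (xb i); case: (xb j); split; apply: join_Theta => t Ht h1 h2.
  - have := cMl (z i) Ht h1; rewrite (meet_r (Hz1 i)) => h3.
    by apply: (cT Ht h3 h2).
  - have h3 := cJ (z j) Ht h2; rewrite meetUK in h3.
    have h4 := cJ (z j) Ht h1; rewrite (join_l (Hz2 j)) in h4.
    exact: (cT Ht h3 h4).
  - have h3 := cMl (z i) Ht h1; rewrite (meet_l (Hz2 i)) in h3.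
    exact: (cT Ht h2 h3).
  - have h3 := cM (z j) Ht h1; rewrite (meet_r (Hz2 j)) in h3.
    exact: (cT Ht h2 h3).
  - have h3 := cJl (z i) Ht h1; rewrite (join_l (Hz1 i)) in h3.
    exact: (cT Ht h3 h2).
  - have h3 := cJ (z j) Ht h1; rewrite (join_r (Hz1 j)) in h3.
    exact: (cT Ht h3 h2).
  - have h3 := cJl (z i) Ht h1; rewrite (join_r (Hz2 i)) in h3.
    exact: (cT Ht h2 h3).
  - have h3 := cJ (z j) Ht h1; rewrite (join_r (Hz1 j)) in h3.
    exact: (cT Ht h1 (cT Ht h2 (cS Ht h3))).
move=> i j k; rewrite /gamma.
case Ei: (xb i); case Ej: (xb j); case Ek: (xb k) => C1 C2;
  try (by exfalso; apply: C2; split);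
  try (by have := C1 (conj erefl erefl));
  apply: join_Theta => t Ht h1 h2.
- have A := cM (z k) Ht h1. have B := cMl (z i) Ht h2. rewrite meetA in B.
  exact: (cT Ht (cS Ht A) (cT Ht B h1)).
- have A := cM (z k) Ht h1. have B := cMl (z i) Ht h2.
  rewrite meetA (meet_r (Hz1 i)) in B.
  exact: (cT Ht B A).
- have C := cM (z k) Ht h1; rewrite (meet_l (Hz1 k)) meetAC in C.
  have D := cMl (z i `&` z k) Ht h2.
  rewrite (meet_l (le_trans (leIr _ _) (zUr j k))) in D.
  exact: (cT Ht C D).
- have E := cJ (z k) Ht h1; rewrite (join_l (Hz2 k)) in E.
  have F := cJl (z i `|` z k) Ht h2.
  rewrite (join_l (le_trans (zIr j k) (zUr i k))) joinAC in F.
  exact: (cT Ht F E).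
- have G := cJ (z k) Ht h1. have H := cJl (z i) Ht h2.
  rewrite joinA (join_r (Hz2 i)) in H.
  exact: (cT Ht G H).
- have G := cJ (z k) Ht h1. have H := cJl (z i) Ht h2. rewrite joinA in H.
  exact: (cT Ht h1 (cT Ht H (cS Ht G))).
Qed.

End Main.

Lemma normz {d : Order.disp_t} {L : latticeType d} (t1 t2 : lrel L) (a b w : L) :
  is_con t1 -> is_con t2 -> a <= b -> t1 a w -> t2 w b ->
  [/\ a <= (w `|` a) `&` b, (w `|` a) `&` b <= b,
      t1 a ((w `|` a) `&` b) & t2 ((w `|` a) `&` b) b].
Proof.
move=> H1 H2 ab h1 h2; split.
- by rewrite lexI leUr ab.
- exact: leIr.
- have := cM b H1 (cJ a H1 h1); by rewrite joinxx (meet_l ab).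
- have := cM b H2 (cJ a H2 h2); by rewrite (join_l ab) meetxx.
Qed.

Theorem theorem2p4 (d : Order.disp_t) (L : latticeType d) :
  has_almost_permutable_congruences L ->
  forall u v : L, URP1m_at (Theta u v).
Proof.
move=> Hap u v I alpha beta HA HB Heps.
pose a := u `&` v; pose b := u `|` v.
have ab : a <= b by apply: le_trans (leIl _ _) (leUl _ _).
have Tab : Theta u v a b.
  move=> t Ht h; apply: (cT Ht (y := v)).
    by have := cM v Ht h; rewrite meetxx.
  by have := cJ v Ht (cS Ht h); rewrite joinxx.
have uv_ab : forall t, is_con t -> t a b -> t u v.
  move=> t Ht h.
  have h1 := cJ u Ht h; rewrite /a /b in h1.
  rewrite joinC (join_l (leIl _ _)) joinAC joinxx in h1.
  have h2 := cJ v Ht h; rewrite /a /b in h2.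
  rewrite joinC (join_l (leIr _ _)) -joinA joinxx in h2.
  exact: (cT Ht h1 (cS Ht h2)).
pose xb i := if excluded_middle_informative (rcomp (alpha i) (beta i) a b)
             then true else false.
have Hex : forall i, exists z0, [/\ a <= z0, z0 <= b &
   if xb i then alpha i a z0 /\ beta i z0 b else beta i a z0 /\ alpha i z0 b].
  move=> i.
  have hab : con_join (alpha i) (beta i) a b by apply/(Heps i).
  have := (Hap _ _ (proj1 (HA i)) (proj1 (HB i)) a b).1 hab.
  rewrite /xb; case: excluded_middle_informative => [[w [h1 h2]] | hn] hor.
    have [? ? ? ?] := normz _ _ _ _ _ (proj1 (HA i)) (proj1 (HB i)) ab h1 h2.
    by eexists; split; eauto.
  case: hor => [//|[w [h1 h2]]].
  have [? ? ? ?] := normz _ _ _ _ _ (proj1 (HB i)) (proj1 (HA i)) ab h1 h2.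
  by eexists; split; eauto.
pose z i := proj1_sig (constructive_indefinite_description _ (Hex i)).
have Hz : forall i, [/\ a <= z i, z i <= b &
   if xb i then alpha i a (z i) /\ beta i (z i) b
   else beta i a (z i) /\ alpha i (z i) b].
  move=> i; exact: (proj2_sig (constructive_indefinite_description _ (Hex i))).
apply: (@main_family _ L a b ab I alpha beta (Theta u v) z xb).
- by move=> i; case: (HA i).
- by move=> i; case: (HB i).
- by move=> i; case: (Hz i).
- by move=> i; case: (Hz i).
- by move=> i; case: (Hz i).
- exact: Heps.
- move=> t Ht h; apply: Theta_min => //; exact: uv_ab.
- exact: Theta_con.
Qed.
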